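(* Let $G$ be a finite simple (unweighted) graph with $n$ vertices. Then \[\sum_{\lambda\vdash n}[X_{P_\lambda}]X_G=1,\] i.e. $\tau_G(1)=1$.
   Context: $X_G=\sum_\kappa\prod_v x_{\kappa(v)}$ over proper colourings $\kappa:V(G)\to\{1,2,\dots\}$. $P_\lambda$ is the disjoint union of paths $P_{\lambda_1},\dots,P_{\lambda_{\ell(\lambda)}}$ ($P_n$ the path on $n$ vertices); $\{X_{P_\lambda}\}$ is a basis of the algebra of symmetric functions over $\mathbb{Q}$, and $[X_{P_\lambda}]f$ is the coefficient of $X_{P_\lambda}$ in $f$. $\tau_G(x)=\sum_\lambda [X_{P_\lambda}]X_G\, x^{\ell(\lambda)}$. *)

(* Defs.v *)
From mathcomp Require Import all_boot all_algebra.
From mathcomp Require Import mpoly.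
Set Implicit Arguments. Unset Strict Implicit. Unset Printing Implicit Defensive.
Import GRing.Theory.
Local Open Scope ring_scope.

Definition proper_col (V : finType) (e : rel V) (N : nat) (k : {ffun V -> 'I_N}) :=
  [forall x, forall y, e x y ==> (k x != k y)].

(* Chromatic symmetric function X_G restricted to N variables x_0..x_{N-1}. *)
Definition chrom (V : finType) (e : rel V) (N : nat) : {mpoly rat[N]} :=
  \sum_(k : {ffun V -> 'I_N} | proper_col e k) \prod_(v : V) 'X_(k v).

(* The disjoint union of paths P_{l_1}, ..., P_{l_m} : vertex (i, a) with a < l_i,
   edges between (i,a) and (i,a+1). *)
Definition pu_vert (l : seq nat) : finType :=
  {i : 'I_(size l) & 'I_(nth 0%N l i)}.
Definition pu_edge (l : seq nat) : rel (pu_vert l) :=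
  fun x y => (tag x == tag y) &&
     (((val (tagged x)).+1 == val (tagged y)) || ((val (tagged y)).+1 == val (tagged x))).

(* Partitions of n are encoded as weakly decreasing n-tuples with entries in
   0..n summing to n (padded by zeros); shape drops the zeros. *)
Definition ptuple (n : nat) := (n.-tuple 'I_n.+1)%type.
Definition is_partn (n : nat) (t : ptuple n) : bool :=
  sorted geq (map val t) && (sumn (map val t) == n).
Definition shape (n : nat) (t : ptuple n) : seq nat :=
  filter (fun k => 0 < k)%N (map val t).

Definition XP (n N : nat) (t : ptuple n) : {mpoly rat[N]} :=
  chrom (@pu_edge (shape t)) N.

(* Main.v *)
Require Import Defs.
From mathcomp Require Import all_boot all_algebra.
From mathcomp Require Import mpoly.
From mathcomp Require Import zify.
Set Implicit Arguments. Unset Strict Implicit. Unset Printing Implicit Defensive.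
Import GRing.Theory.
Local Open Scope ring_scope.

Lemma prod_bool (R : comNzRingType) (T : finType) (A : {pred T}) (b : T -> bool) :
  \prod_(p in A) ((b p)%:R : R) = ([forall p in A, b p])%:R.
Proof.
case: (boolP [forall p in A, b p]) => [/forall_inP H|/forall_inPn [p pA nb]].
  by apply: big1 => p /H ->.
by rewrite (bigD1 p) //= (negbTE nb) mul0r.
Qed.

Lemma incl_excl (R : comNzRingType) (T : finType) (E : {set T}) (b : T -> bool) :
  (([forall p in E, ~~ b p])%:R : R) =
  \sum_(S : {set T} | S \subset E) (-1) ^+ #|S| * ([forall p in S, b p])%:R.
Proof.
rewrite -prod_bool.
have -> : \prod_(p in E) ((~~ b p)%:R : R) =
   \prod_p ((if p \in E then - (b p)%:R else 0) + 1).
  rewrite [RHS](bigID (mem E)) /= [X in _ * X]big1 ?mulr1; last first.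
    by move=> p /negbTE ->; rewrite add0r.
  apply: eq_bigr => p ->; case: (b p) => /=; last by rewrite oppr0 add0r.
  by rewrite addNr.
rewrite bigA_distr /= [LHS](bigID (fun S : {set T} => S \subset E)) /=.
rewrite [X in _ + X]big1 ?addr0; last first.
  move=> S /subsetPn [p pS pE].
  by rewrite (bigD1 p) //= pS (negbTE pE) mul0r.
apply: eq_bigr => S sE.
rewrite -prod_bool -big_mkcond /=.
have -> : \prod_(i in S) (if i \in E then - ((b i)%:R : R) else 0) =
   \prod_(i in S) ((-1) * (b i)%:R).
  by apply: eq_bigr => p pS; rewrite (subsetP sE p pS) mulN1r.
by rewrite big_split /= prodr_const.
Qed.

Section Gen.
Variables (V : finType) (N : nat).

Implicit Type S : {set V * V}.
Definition adj (S : {set V * V}) : rel V := fun x y => ((x, y) \in S) || ((y, x) \in S).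
Lemma adj_sym S : connect_sym (adj S).
Proof. by apply: sym_connect_sym => x y; rewrite /adj orbC. Qed.

Definition rt S := fingraph.root (adj S).
Definition csizes S : seq nat :=
  [seq #|[pred v | rt S v == r]| | r <- enum (roots (adj S))].
Definition pw (j : nat) : {mpoly rat[N]} := \sum_(i < N) 'X_i ^+ j.
Definition psp (s : seq nat) := \prod_(j <- s) pw j.

Lemma rt_root S v : rt S v \in roots (adj S).
Proof. exact: (roots_root (adj_sym S)). Qed.

Lemma rt_rt S v : rt S (rt S v) = rt S v.
Proof. exact: (root_root (adj_sym S)). Qed.

Lemma root_fix S r : r \in roots (adj S) -> rt S r = r.
Proof. by move/eqP. Qed.

Lemma cst_root S (k : {ffun V -> 'I_N}) :
  [forall p in S, k p.1 == k p.2] = [forall v, k v == k (rt S v)].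
Proof.
apply/forall_inP/forallP => [H v|H p pS].
  have : connect (adj S) v (rt S v) by exact: connect_root.
  pose a := [pred z | k z == k v].
  have ca : closed (adj S) a.
    by move=> x y /orP [] /H /= /eqP exy; rewrite !inE /= exy.
  by move=> c; move: (closed_connect ca c); rewrite !inE /= eqxx => /esym/eqP ->.
have c : connect (adj S) p.1 p.2 by apply: connect1; rewrite /adj -surjective_pairing pS.
move/(fingraph.rootP (adj_sym S)): c => c.
by rewrite (eqP (H p.1)) (eqP (H p.2)) /rt c.
Qed.

Lemma sumF S : (0 < N)%N ->
  \sum_(k : {ffun V -> 'I_N} | [forall p in S, k p.1 == k p.2]) \prod_(v : V) ('X_(k v) : {mpoly rat[N]})
  = psp (csizes S).
Proof.
move=> hN; pose j0 := Ordinal hN.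
pose h (f : {ffun V -> 'I_N}) := [ffun v => f (rt S v)].
pose h' (k : {ffun V -> 'I_N}) := [ffun v => if v \in roots (adj S) then k v else j0].
rewrite (reindex_onto h h'); last first.
  move=> k; rewrite cst_root => /forallP H; apply/ffunP => v.
  by rewrite !ffunE rt_root (eqP (H v)).
have eqP1 : forall f, [forall p in S, h f p.1 == h f p.2] && (h' (h f) == f)
   = (f \in pffun_on j0 (roots (adj S)) predT).
  move=> f; rewrite cst_root.
  have -> : [forall v, h f v == h f (rt S v)].
    by apply/forallP => v; rewrite !ffunE rt_rt.
  apply/eqP/pffun_onP => [H|[H _]].
    split=> //; apply/subsetP => v; rewrite inE; apply: contraR => nv.
    by rewrite -H ffunE (negbTE nv).
  apply/ffunP => v; rewrite !ffunE; case: ifP => hv.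
    by rewrite root_fix.
  apply/esym/eqP; apply: contraFT hv => hne.
  by apply: (subsetP H); rewrite inE.
rewrite (eq_bigl _ _ eqP1).
have eqF : forall f : {ffun V -> 'I_N}, \prod_(v : V) ('X_(h f v) : {mpoly rat[N]}) =
   \prod_(r in roots (adj S)) 'X_(f r) ^+ #|[pred v | rt S v == r]|.
  move=> f; rewrite (partition_big (rt S) (mem (roots (adj S)))) /=; last by move=> v _; exact: rt_root.
  apply: eq_bigr => r _.
  rewrite (eq_bigr (fun _ => 'X_(f r))); last by move=> v; rewrite ?andTb => /eqP <-; rewrite ffunE.
  rewrite -(prodr_const [pred v | rt S v == r]); apply: eq_bigl => v; by rewrite inE.
rewrite (eq_bigr _ (fun f _ => eqF f)).
rewrite -(big_distr_big j0 (mem (roots (adj S))) predT (fun r j => ('X_j : {mpoly rat[N]}) ^+ #|[pred v | rt S v == r]|)).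
by rewrite /psp big_map big_enum.
Qed.
Lemma expand (E : {set V * V}) : (0 < N)%N ->
  \sum_(k : {ffun V -> 'I_N} | [forall p in E, k p.1 != k p.2]) \prod_(v : V) ('X_(k v) : {mpoly rat[N]})
  = \sum_(S : {set V * V} | S \subset E) (-1) ^+ #|S| * psp (csizes S).
Proof.
move=> hN; rewrite big_mkcond /=.
have H : forall (b : bool) (x : {mpoly rat[N]}), (if b then x else 0) = b%:R * x.
  by case=> x; rewrite ?mul1r ?mul0r.
under eq_bigr => k _ do rewrite H (@incl_excl _ _ E (fun p => k p.1 == k p.2)) mulr_suml.
rewrite exchange_big /=; apply: eq_bigr => S _.
rewrite -sumF // mulr_sumr [in RHS]big_mkcond /=; apply: eq_bigr => k _.
by rewrite H mulrCA mulrA.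
Qed.

Lemma csizes_pos S : all (fun k => 0 < k)%N (csizes S).
Proof.
apply/allP => x /mapP [r]; rewrite mem_enum => hr ->.
by apply/card_gt0P; exists r; rewrite inE /= root_fix.
Qed.

Lemma csizes_sum S : sumn (csizes S) = #|V|.
Proof.
rewrite sumnE big_map big_enum /=.
rewrite -[RHS]sum1_card [RHS](partition_big (rt S) (mem (roots (adj S)))) /=; last by move=> v _; exact: rt_root.
apply: eq_bigr => r _; rewrite -sum1_card; apply: eq_bigl => v; by rewrite inE.
Qed.

Lemma csizes_size S : size (csizes S) = #|roots (adj S)|.
Proof. by rewrite size_map cardE. Qed.

End Gen.
Lemma size_le_sumn (s : seq nat) : all (fun k => 0 < k)%N s -> (size s <= sumn s)%N.
Proof. elim: s => //= x s IH /andP [hx /IH]; rewrite -add1n; exact: leq_add. Qed.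

Lemma elem_le_sumn (s : seq nat) x : x \in s -> (x <= sumn s)%N.
Proof.
elim: s => //= y s IH; rewrite inE => /orP [/eqP ->|/IH h]; first exact: leq_addr.
exact: (leq_trans h (leq_addl _ _)).
Qed.

Lemma path_nseq0 a m : path geq a (nseq m 0%N).
Proof. by elim: m a => //= m IH a; rewrite IH andbT. Qed.

Lemma tofp n (s : seq nat) : all (fun k => 0 < k)%N s -> sumn s = n ->
  exists t : ptuple n, is_partn t /\ perm_eq (Defs.shape t) s.
Proof.
move=> hpos hsum.
pose L := sort geq s ++ nseq (n - size s) 0%N.
have hsz : (size s <= n)%N by rewrite -hsum; exact: size_le_sumn.
have sL : size (map (@inord n) L) == n.
  by rewrite size_map size_cat size_sort size_nseq subnKC.
have hL : forall x, x \in L -> (x < n.+1)%N.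
  move=> x; rewrite mem_cat mem_sort => /orP [/elem_le_sumn|/nseqP [-> _]] //.
  by rewrite hsum ltnS.
pose t : ptuple n := Tuple sL.
have vt : map val t = L.
  rewrite /= -map_comp -[RHS]map_id; apply/eq_in_map => x /hL hx /=.
  by rewrite inordK.
exists t; rewrite /is_partn /Defs.shape vt; split.
  apply/andP; split.
    rewrite /L; case hs: (sort geq s) => [|x s'] /=; first by case: (n - size s)%N => // m; exact: path_nseq0.
    rewrite cat_path; apply/andP; split; last exact: path_nseq0.
    have := sort_sorted (fun a b => leq_total b a) s; by rewrite hs.
  by rewrite sumn_cat sumn_nseq mul0n addn0 (perm_sumn (permEl (perm_sort _ _))) hsum.
rewrite filter_cat.
have -> : [seq x <- nseq (n - size s) 0%N | (0 < x)%N] = [::].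
  by elim: (n - size s)%N.
rewrite cats0; have /all_filterP -> : all (fun k => 0 < k)%N (sort geq s).
  by rewrite all_sort.
by rewrite perm_sort.
Qed.

Lemma map_nth_enum (l : seq nat) : map (fun i : 'I_(size l) => nth 0%N l i) (enum 'I_(size l)) = l.
Proof.
have -> : map (fun i : 'I_(size l) => nth 0%N l i) (enum 'I_(size l)) = map (nth 0%N l) (map val (enum 'I_(size l))).
  by rewrite -map_comp.
by rewrite val_enum_ord; exact: mkseq_nth.
Qed.

Section PU.
Variable l : seq nat.
Hypothesis hl : all (fun k => 0 < k)%N l.
Local Notation W := (pu_vert l).

Definition Epu : {set W * W} :=
  [set p | (tag p.1 == tag p.2) && ((val (tagged p.1)).+1 == val (tagged p.2))].

Lemma sig_eq (u w : W) : tag u = tag w -> val (tagged u) = val (tagged w) -> u = w.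
Proof. case: u => i a; case: w => j b /= Hij; subst j => /val_inj -> //. Qed.

Lemma pu_proper N (k : {ffun W -> 'I_N}) :
  proper_col (@pu_edge l) k = [forall p in Epu, k p.1 != k p.2].
Proof.
apply/forallP/forall_inP => [H p|H x].
  rewrite inE => /andP [/eqP ht /eqP hv].
  move: (H p.1) => /forallP /(_ p.2) /implyP; apply.
  by rewrite /pu_edge hv eqxx orTb andbT; apply/eqP.
apply/forallP => y; apply/implyP; rewrite /pu_edge => /andP [/eqP ht /orP [] /eqP hv].
  by apply: (H (x, y)); rewrite inE /= hv eqxx andbT; apply/eqP.
by rewrite eq_sym; apply: (H (y, x)); rewrite inE /= hv eqxx andbT; apply/eqP.
Qed.

Lemma conn_tag (S : {set W * W}) (x y : W) : S \subset Epu -> connect (adj S) x y -> tag x = tag y.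
Proof.
move=> sS c.
have ca : closed (adj S) [pred z : W | tag z == tag x].
  move=> u w /orP [] /(subsetP sS); rewrite inE => /andP [/eqP /= h _];
  by rewrite !inE /= h.
by move: (closed_connect ca c); rewrite !inE /= eqxx => /esym/eqP.
Qed.

Lemma conn_E (x y : W) : tag x = tag y -> connect (adj Epu) x y.
Proof.
have h0 : forall x : W, (0 < nth 0%N l (tag x))%N.
  by move=> z; exact: (leq_ltn_trans (leq0n _) (ltn_ord (tagged z))).
pose z0 (x : W) : W := Tagged (fun i : 'I_(size l) => 'I_(nth 0%N l i)) (Ordinal (h0 x)).
have H : forall a (x : W), val (tagged x) = a -> connect (adj Epu) x (z0 x).
  elim=> [|a IH] z hz.
    have -> : z0 z = z by apply: sig_eq => //=; rewrite hz.
    exact: connect0.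
  have ha : (a < nth 0%N l (tag z))%N by apply: ltnW; rewrite -hz; exact: ltn_ord.
  pose z' : W := Tagged (fun i : 'I_(size l) => 'I_(nth 0%N l i)) (Ordinal ha).
  apply: (@connect_trans _ _ z').
    apply: connect1; rewrite /adj; apply/orP; right.
    by rewrite inE /= eqxx hz eqxx.
  have -> : z0 z = z0 z' by rewrite /z0 /=; apply: sig_eq.
  exact: IH.
move=> hxy; apply: (@connect_trans _ _ (z0 x)); first exact: (H _ x erefl).
rewrite (adj_sym Epu).
have -> : z0 x = z0 y by apply: sig_eq.
exact: (H _ y erefl).
Qed.

Lemma cut (S : {set W * W}) (p : W * W) : S \subset Epu -> p \in Epu -> p \notin S ->
  ~~ connect (adj S) p.1 p.2.
Proof.
move=> sS pE pS.
move: (pE); rewrite inE => /andP [/eqP ht /eqP hv].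
pose a := [pred z : W | (tag z != tag p.1) || (val (tagged z) <= val (tagged p.1))%N].
have hq : forall q, q \in S -> (q.1 \in a) = (q.2 \in a).
  move=> q qS; move: (subsetP sS q qS); rewrite inE => /andP [/eqP hqt /eqP hqv].
  rewrite !inE /=.
  have -> : (tag q.2 != tag p.1) = (tag q.1 != tag p.1) by rewrite hqt.
  rewrite -hqv.
  case: (eqVneq (tag q.1) (tag p.1)) => //= htq.
  case: (eqVneq (val (tagged q.1)) (val (tagged p.1))) => hvq.
    have e1 : q.1 = p.1 by apply: sig_eq.
    have e2 : q.2 = p.2.
      apply: sig_eq; first by rewrite -hqt htq ht.
      by rewrite -hqv -hv hvq.
    have epq : p = q by rewrite [p]surjective_pairing [q]surjective_pairing e1 e2.
    by move: pS; rewrite epq qS.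
  by rewrite ltn_neqAle hvq.
have ca : closed (adj S) a.
  by move=> u w /orP [] /hq //= ->.
apply/negP => /(closed_connect ca); rewrite !inE eqxx leqnn /= -hv ltnn.
by rewrite -ht eqxx.
Qed.

Lemma pos_nth (i : 'I_(size l)) : (0 < nth 0%N l i)%N.
Proof. by apply: (allP hl); apply: mem_nth. Qed.

Lemma tag_onto (S : {set W * W}) (i : 'I_(size l)) : S \subset Epu ->
  exists2 r, r \in roots (adj S) & tag r = i.
Proof.
move=> sS; pose v : W := Tagged (fun i : 'I_(size l) => 'I_(nth 0%N l i)) (Ordinal (pos_nth i)).
exists (rt S v); first exact: rt_root.
by rewrite -(conn_tag sS (connect_root _ v)).
Qed.

Lemma tags_card (S : {set W * W}) : S \subset Epu ->
  #|[set tag r | r in roots (adj S)]| = size l.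
Proof.
move=> sS; apply/eqP; rewrite eqn_leq; apply/andP; split.
  by rewrite -[X in (_ <= X)%N]card_ord max_card.
rewrite -[X in (X <= _)%N]card_ord -cardsT; apply: subset_leq_card.
apply/subsetP => i _; have [r hr <-] := tag_onto i sS; exact: imset_f.
Qed.

Lemma roots_gt (S : {set W * W}) : S \subset Epu -> S != Epu ->
  (size l < #|roots (adj S)|)%N.
Proof.
move=> sS nS.
have : ~~ (Epu \subset S) by apply: contra nS => h; rewrite eqEsubset sS h.
case/subsetPn => p pE pS.
have nc := cut sS pE pS.
rewrite -(tags_card sS) ltn_neqAle leq_imset_card andbT.
apply/imset_injP => hinj.
move: (pE); rewrite inE => /andP [/eqP ht _].
have : rt S p.1 = rt S p.2.
  apply: hinj; rewrite ?rt_root //.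
  rewrite -(conn_tag sS (connect_root _ p.1)) -(conn_tag sS (connect_root _ p.2)).
  exact: ht.
by move/(fingraph.rootP (adj_sym S)); rewrite (negbTE nc).
Qed.

Lemma fiber_tag (i : 'I_(size l)) : #|[pred v : W | tag v == i]| = nth 0%N l i.
Proof.
pose b (a : 'I_(nth 0%N l i)) : W := Tagged (fun i : 'I_(size l) => 'I_(nth 0%N l i)) a.
have binj : injective b.
  by move=> a1 a2 h; apply: val_inj; exact: (congr1 (fun v : W => val (tagged v)) h).
rewrite -[RHS]card_ord -(card_codom binj); apply: eq_card => v; rewrite !inE.
apply/idP/idP.
  case: v => j a /= /eqP hj; subst j; exact: codom_f.
by case/codomP => a ->.
Qed.

Lemma perm_E : perm_eq (csizes Epu) l.
Proof.
have sE : Epu \subset Epu by [].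
rewrite /csizes.
have -> : [seq #|[pred v | rt Epu v == r]| | r <- enum (roots (adj Epu))] =
   map (fun i : 'I_(size l) => nth 0%N l i) (map tag (enum (roots (adj Epu)))).
  rewrite -map_comp; apply/eq_in_map => r; rewrite mem_enum => hr /=.
  rewrite -fiber_tag; apply: eq_card => v; rewrite !inE.
  rewrite -{1}(root_fix hr); apply/eqP/eqP.
    by move/(fingraph.rootP (adj_sym _)) => c; exact: (conn_tag sE c).
  by move=> h; apply/(fingraph.rootP (adj_sym _)); apply: conn_E.
rewrite -[X in perm_eq _ X]map_nth_enum; apply: perm_map.
apply: uniq_perm; rewrite ?enum_uniq //.
  rewrite map_inj_in_uniq ?enum_uniq // => r1 r2; rewrite !mem_enum => h1 h2 h.
  by rewrite -(root_fix h1) -(root_fix h2); apply/(fingraph.rootP (adj_sym _)); apply: conn_E.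
move=> i; rewrite mem_enum; have [r hr <-] := tag_onto i sE.
by rewrite map_f // mem_enum.
Qed.

Lemma card_W : #|W| = sumn l.
Proof.
rewrite card_tagged -[RHS](congr1 sumn (map_nth_enum l)); congr sumn.
by apply: eq_map => i; rewrite card_ord.
Qed.

End PU.

Lemma sumn_filter_pos (s : seq nat) : sumn [seq x <- s | (0 < x)%N] = sumn s.
Proof. by elim: s => //= x s IH; case: x => //= x; rewrite IH. Qed.

Lemma shape_pos n (t : ptuple n) : all (fun k => 0 < k)%N (Defs.shape t).
Proof. exact: filter_all. Qed.

Lemma shape_sum n (t : ptuple n) : is_partn t -> sumn (Defs.shape t) = n.
Proof. by case/andP => _ /eqP; rewrite /Defs.shape sumn_filter_pos. Qed.

Lemma card_XP n (t : ptuple n) : is_partn t -> #|pu_vert (Defs.shape t)| = n.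
Proof. by move=> ht; rewrite card_W shape_sum. Qed.

Lemma pu_irr l : irreflexive (@pu_edge l).
Proof. by move=> x; rewrite /pu_edge eqxx /= orbb gtn_eqF. Qed.

Lemma chrom_empty (W : finType) (e : rel W) N : #|W| = 0%N -> chrom e N = 1.
Proof.
move=> h; rewrite /chrom.
have -> : \sum_(k : {ffun W -> 'I_N} | proper_col e k) \prod_(v : W) ('X_(k v) : {mpoly rat[N]})
   = \sum_(k : {ffun W -> 'I_N}) 1.
  apply: eq_big => [k|k _].
    by apply/forallP => x; move: (card0_eq h x); rewrite !inE.
  by apply: big1 => v _; move: (card0_eq h v); rewrite !inE.
by rewrite sumr_const card_ffun h expn0.
Qed.

Lemma psp_perm N (s1 s2 : seq nat) : perm_eq s1 s2 -> psp N s1 = psp N s2.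
Proof. by move=> h; rewrite /psp (perm_big _ h). Qed.

Lemma signK (R : nzRingType) k (x : R) : (-1) ^+ k * ((-1) ^+ k * x) = x.
Proof. by rewrite -signr_odd signrMK. Qed.

Lemma arith (n a b m : nat) : (a < b)%N -> (b <= n)%N -> (n - a <= m)%N -> (n - b < m)%N.
Proof. move=> h1 h2 h3; lia. Qed.

Lemma split_top (R : nzRingType) (T : finType) (E : T) (P : pred T) (F : T -> R) (x y : R) :
  P E -> F E = x -> \sum_(S | P S && (S != E)) F S = y -> \sum_(S | P S) F S = x + y.
Proof. by move=> hE hx hy; rewrite (bigD1 E) //= hx hy. Qed.

Section Span.
Variable n : nat.

Definition inspan (P : {mpoly rat[n]}) :=
  exists c : ptuple n -> rat, P = \sum_(t : ptuple n | is_partn t) c t *: XP n t.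

Lemma span0 : inspan 0.
Proof. by exists (fun _ => 0); rewrite big1 // => t _; rewrite scale0r. Qed.

Lemma spanD P Q : inspan P -> inspan Q -> inspan (P + Q).
Proof.
move=> [c1 ->] [c2 ->]; exists (fun t => c1 t + c2 t).
by rewrite -big_split /=; apply: eq_bigr => t _; rewrite scalerDl.
Qed.

Lemma spanZ (a : rat) P : inspan P -> inspan (a *: P).
Proof.
move=> [c ->]; exists (fun t => a * c t).
by rewrite scaler_sumr; apply: eq_bigr => t _; rewrite scalerA.
Qed.

Lemma spanN P : inspan P -> inspan (- P).
Proof. by move=> h; rewrite -scaleN1r; apply: spanZ. Qed.

Lemma spanB P Q : inspan P -> inspan Q -> inspan (P - Q).
Proof. by move=> hP hQ; apply: spanD => //; apply: spanN. Qed.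

Lemma span_sign k P : inspan P -> inspan ((-1) ^+ k * P).
Proof. by move=> h; rewrite -signr_odd; case: (odd k); rewrite ?expr0 ?expr1 ?mul1r ?mulN1r //; apply: spanN. Qed.

Lemma span_sum (I : finType) (Q : pred I) (F : I -> {mpoly rat[n]}) :
  (forall i, Q i -> inspan (F i)) -> inspan (\sum_(i | Q i) F i).
Proof. by move=> h; apply: big_ind => //; [exact: span0 | exact: spanD]. Qed.

Lemma span_XP (t : ptuple n) : is_partn t -> inspan (XP n t).
Proof.
move=> ht; exists (fun t' => (t' == t)%:R).
rewrite (bigD1 t) //= eqxx scale1r big1 ?addr0 // => t' /andP [_ /negbTE ->].
by rewrite scale0r.
Qed.

Lemma spanC (hn : (0 < n)%N) : forall t : ptuple n, is_partn t -> inspan (psp n (Defs.shape t)).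
Proof.
suff H : forall m (t : ptuple n), is_partn t -> (n - size (Defs.shape t) < m)%N ->
    inspan (psp n (Defs.shape t)).
  by move=> t ht; exact: (H _ t ht (ltnSn _)).
elim=> // m IH t ht hm.
set l := Defs.shape t.
have hl : all (fun k => 0 < k)%N l by exact: shape_pos.
have sl : sumn l = n by exact: shape_sum.
have hX : XP n t = \sum_(S : {set pu_vert l * pu_vert l} | S \subset Epu l)
    (-1) ^+ #|S| * psp n (csizes S).
  rewrite /XP /chrom -/l -(expand _ hn); apply: eq_bigl => k; exact: pu_proper.
set rest := \sum_(S : {set pu_vert l * pu_vert l} | (S \subset Epu l) && (S != Epu l))
    (-1) ^+ #|S| * psp n (csizes S).
have hX2 : XP n t = (-1) ^+ #|Epu l| * psp n l + rest.
  rewrite hX; apply: split_top => //.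
  by rewrite (psp_perm _ (perm_E hl)).
have -> : psp n l = (-1) ^+ #|Epu l| * (XP n t - rest).
  by rewrite hX2 addrK signK.
apply: span_sign; apply: spanB; first exact: span_XP.
apply: span_sum => S /andP [sS nS]; apply: span_sign.
have hcs : sumn (csizes S) = n by rewrite csizes_sum card_W.
have [t' [ht' pt']] := tofp (csizes_pos S) hcs.
rewrite -(psp_perm _ pt'); apply: IH => //.
have h1 : (size l < size (Defs.shape t'))%N.
  by rewrite (perm_size pt') csizes_size roots_gt.
have h2 : (size (Defs.shape t') <= n)%N.
  by rewrite -{2}(shape_sum ht'); apply: size_le_sumn; exact: shape_pos.
rewrite ltnS in hm; exact: (arith h1 h2 hm).
Qed.

End Span.
Definition ones (N : nat) : 'X_{1..N} := [multinom 1%N | i < N].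

Lemma prodX_mnm (N : nat) (I : Type) (r : seq I) (P : pred I) (F : I -> 'X_{1..N}) :
  \prod_(i <- r | P i) ('X_[F i] : {mpoly rat[N]}) = 'X_[(\sum_(i <- r | P i) F i)%MM].
Proof.
by rewrite (big_morph (fun m => ('X_[m] : {mpoly rat[N]})) (@mpolyXD _ _) (@mpolyX0 _ _)).
Qed.

Lemma fiber_card (V : finType) (N : nat) (k : {ffun V -> 'I_N}) (i : 'I_N) :
  ((\sum_(v : V) mnm1 (k v))%MM i = #|[pred v | k v == i]|)%N.
Proof.
rewrite mnm_sumE -sum1_card [RHS]big_mkcond /=; apply: eq_bigr => v _.
by rewrite mnm1E inE; case: (k v == i).
Qed.

Lemma mono_inj (V : finType) (N : nat) (k : {ffun V -> 'I_N}) :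
  #|V| = N -> ((\sum_(v : V) mnm1 (k v))%MM == ones N) = injectiveb k.
Proof.
move=> hV; apply/eqP/injectiveP => [h x y hxy|hinj].
  have := congr1 (fun m : 'X_{1..N} => m (k x)) h.
  rewrite fiber_card /ones mnmE => hc.
  have /card_le1_eqP H : (#|[pred v | k v == k x]| <= 1)%N by rewrite hc.
  by apply: H; rewrite inE /= ?hxy.
apply/mnmP => i; rewrite fiber_card /ones mnmE.
have : i \in codom k by apply: inj_card_onto => //; rewrite hV card_ord.
move=> /codomP [x ->].
rewrite -(card1 x); apply: eq_card => v; rewrite !inE.
by apply/eqP/eqP => [/hinj|->].
Qed.

Lemma coef_chrom (V : finType) (e : rel V) (N : nat) :
  irreflexive e -> #|V| = N -> mcoeff (ones N) (chrom e N) = (N`!)%:R.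
Proof.
move=> irr hV; rewrite /chrom raddf_sum /=.
under eq_bigr => k _ do rewrite prodX_mnm mcoeffX (mono_inj _ hV).
rewrite -natr_sum; congr (_%:R).
have -> : N`! = #|[set f : {ffun V -> 'I_N} | injectiveb f]|.
  by rewrite card_inj_ffuns card_ord hV ffactnn.
rewrite -sum1_card.
rewrite big_mkcond [RHS]big_mkcond /=; apply: eq_bigr => k _.
rewrite inE; case: (boolP (injectiveb k)) => [/injectiveP hinj|_]; last by case: ifP.
suff -> : proper_col e k by [].
apply/forallP => x; apply/forallP => y.
apply/implyP => exy; apply: contraTneq exy => /hinj ->; by rewrite irr.
Qed.

Lemma span_csizes n (hn : (0 < n)%N) (W : finType) (S : {set W * W}) :
  #|W| = n -> inspan (psp n (csizes S)).
Proof.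
move=> hW; have hcs : sumn (csizes S) = n by rewrite csizes_sum.
have [t' [ht' pt']] := tofp (csizes_pos S) hcs.
by rewrite -(psp_perm _ pt'); apply: spanC.
Qed.

Theorem theorem3p4 (V : finType) (e : rel V)
  (e_sym : ssrbool.symmetric e) (e_irr : irreflexive e) :
  let n := #|V| in
  (exists c : ptuple n -> rat,
      chrom e n = \sum_(t : ptuple n | is_partn t) c t *: XP n t) /\
  (forall c : ptuple n -> rat,
      chrom e n = \sum_(t : ptuple n | is_partn t) c t *: XP n t ->
      \sum_(t : ptuple n | is_partn t) c t = 1).
Proof.
move=> n; split.
  case: (posnP n) => hn.
    exists (fun _ => 1).
    have hV : #|V| = 0%N by [].
    rewrite (chrom_empty _ _ hV).
    move: (e); rewrite /n hV => e'.
    rewrite (big_pred1 [tuple]); last by move=> t; rewrite (tuple0 t); apply/esym/eqP.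
    by rewrite scale1r /XP chrom_empty //; apply: card_XP.
  pose E : {set V * V} := [set p | e p.1 p.2].
  have -> : chrom e n = \sum_(S : {set V * V} | S \subset E) (-1) ^+ #|S| * psp n (csizes S).
    rewrite /chrom -(expand _ hn); apply: eq_bigl => k.
    apply/forallP/forall_inP => [H p|H x].
      by rewrite inE => hp; move: (H p.1) => /forallP /(_ p.2) /implyP; apply.
    by apply/forallP => y; apply/implyP => hxy; apply: (H (x, y)); rewrite inE.
  by apply: span_sum => S _; apply: span_sign; apply: span_csizes.
move=> c hc.
have := congr1 (mcoeff (ones n)) hc.
rewrite coef_chrom // raddf_sum /=.
have hXP : forall t : ptuple n, is_partn t -> mcoeff (ones n) (XP n t) = (n`!)%:R.
  by move=> t ht; rewrite /XP coef_chrom ?card_XP //; exact: pu_irr.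
rewrite (eq_bigr (fun t => c t * (n`!)%:R)); last by move=> t ht; rewrite mcoeffZ hXP.
rewrite -mulr_suml => h.
have hf : (n`!)%:R != 0 :> rat by rewrite Num.Theory.pnatr_eq0 -lt0n fact_gt0.
by apply: (mulIf hf); rewrite mul1r.
Qed.
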